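(* Let $h:\mathbb{R}^p\to\mathbb{R}$ be a $\gamma$-strongly concave function with $\gamma>0$ whose gradient is Lipschitz continuous with constant $M>0$. Let $c\ge0$ and let $\varphi:\mathbb{R}^p\to\mathbb{R}^p$ be a mapping with $\|\varphi(\mathbf{z})\|\le c$ for all $\mathbf{z}\in\mathbb{R}^p$. For $\mathbf{z}\in\mathbb{R}^p$ and $\beta\in(0,\frac{\gamma}{8M^2}]$ define $\mathbf{y}=\mathbf{z}+\beta(\nabla h(\mathbf{z})+\varphi(\mathbf{z}))$. Then there is a compact set $V\subset\mathbb{R}^p$, depending on $c$ and $h$ but not on $\beta$, such that $$\|\mathbf{y}\|\le\|\mathbf{z}\|\ \text{ if }\mathbf{z}\notin V,\qquad \|\mathbf{y}\|\le R\ \text{ if }\mathbf{z}\in V,$$ where $R=\max_{\mathbf{v}\in V}\{\|\mathbf{v}\|+\frac{\gamma}{8M^2}\|\nabla h(\mathbf{v})\|\}+\frac{\gamma c}{8M^2}$. *)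

(* Defs.v *)
From Stdlib Require Import Reals.
From mathcomp Require Import all_boot.
Set Implicit Arguments.
Unset Strict Implicit.
Unset Printing Implicit Defensive.
Open Scope R_scope.

Definition vec (p : nat) := 'I_p -> R.

Definition vadd p (x y : vec p) : vec p := fun i => x i + y i.
Definition vsub p (x y : vec p) : vec p := fun i => x i - y i.
Definition vscale p (a : R) (x : vec p) : vec p := fun i => a * x i.

Definition dot p (x y : vec p) : R := \big[Rplus/0]_(i < p) (x i * y i).
Definition vnorm p (x : vec p) : R := sqrt (dot x x).

Definition is_gradient p (h : vec p -> R) (g : vec p -> vec p) : Prop :=
  forall x eps, 0 < eps -> exists delta, 0 < delta /\
    forall d : vec p, vnorm d < delta ->
      Rabs (h (vadd x d) - h x - dot (g x) d) <= eps * vnorm d.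

Definition lipschitz p (M : R) (F : vec p -> vec p) : Prop :=
  forall x y, vnorm (vsub (F x) (F y)) <= M * vnorm (vsub x y).

Definition strongly_concave p (gamma : R) (h : vec p -> R) : Prop :=
  forall x y t, 0 <= t <= 1 ->
    t * h x + (1 - t) * h y + gamma / 2 * t * (1 - t) * (vnorm (vsub x y))^2
      <= h (vadd (vscale t x) (vscale (1 - t) y)).

Definition compact_set p (V : vec p -> Prop) : Prop :=
  forall u : nat -> vec p, (forall n, V (u n)) ->
    exists (phi : nat -> nat) (l : vec p),
      (forall n, (phi n < phi n.+1)%nat) /\ V l /\
      forall eps, 0 < eps -> exists N : nat, forall n : nat, (N <= n)%nat ->
        vnorm (vsub (u (phi n)) l) < eps.

(* Main.v *)
Require Import Defs.
From Stdlib Require Import Reals Lra Lia ZArith Psatz FunctionalExtensionality ClassicalEpsilon Classical.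
From HB Require Import structures.
From mathcomp Require Import all_boot.
Open Scope R_scope.
Set Implicit Arguments.

HB.instance Definition _ := Monoid.isComLaw.Build R 0 Rplus (fun a b c => esym (Rplus_assoc a b c)) Rplus_comm Rplus_0_l.

Section V.
Variable p : nat.
Implicit Types x y z : vec p.

Lemma sum_scale a (F : 'I_p -> R) :
  \big[Rplus/0]_(i < p) (a * F i) = a * \big[Rplus/0]_(i < p) F i.
Proof.
apply: (big_ind2 (fun u v => u = a * v)); first by ring.
  by move=> x1 x2 y1 y2 -> ->; ring.
by [].
Qed.

Lemma sum_le (F G : 'I_p -> R) : (forall i, F i <= G i) ->
  \big[Rplus/0]_(i < p) F i <= \big[Rplus/0]_(i < p) G i.
Proof.
move=> H; apply: (big_ind2 Rle); first lra.
  by move=> *; lra.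
by move=> i _; apply: H.
Qed.

Lemma sum_ge0 (F : 'I_p -> R) : (forall i, 0 <= F i) ->
  0 <= \big[Rplus/0]_(i < p) F i.
Proof.
move=> H; apply: (big_ind (fun u => 0 <= u)); first lra.
  by move=> *; lra.
by move=> i _; apply: H.
Qed.

Lemma sum_const (a : R) : \big[Rplus/0]_(i < p) a = INR p * a.
Proof.
rewrite big_const_ord; elim: p => [|n IH] /=; first ring.
rewrite IH; case: n {IH} => [|n] /=; ring.
Qed.

Lemma dot_addl x y z : dot (vadd x y) z = dot x z + dot y z.
Proof. rewrite /dot -big_split /=; apply: eq_bigr => i _; rewrite /vadd; ring. Qed.

Lemma dot_scalel a x z : dot (vscale a x) z = a * dot x z.
Proof. rewrite /dot -sum_scale; apply: eq_bigr => i _; rewrite /vscale; ring. Qed.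

Lemma dot_sym x y : dot x y = dot y x.
Proof. rewrite /dot; apply: eq_bigr => i _; ring. Qed.

Lemma dot_addr x y z : dot z (vadd x y) = dot z x + dot z y.
Proof. by rewrite dot_sym dot_addl !(dot_sym z). Qed.

Lemma dot_scaler a x z : dot z (vscale a x) = a * dot z x.
Proof. by rewrite dot_sym dot_scalel dot_sym. Qed.

Lemma vsub_eq x y : vsub x y = vadd x (vscale (-1) y).
Proof. apply: functional_extensionality => i; rewrite /vsub /vadd /vscale; ring. Qed.

Lemma dot_subl x y z : dot (vsub x y) z = dot x z - dot y z.
Proof. rewrite vsub_eq dot_addl dot_scalel; ring. Qed.

Lemma dot_subr x y z : dot z (vsub x y) = dot z x - dot z y.
Proof. rewrite vsub_eq dot_addr dot_scaler; ring. Qed.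

Lemma dot_ge0 x : 0 <= dot x x.
Proof. apply: sum_ge0 => i; nra. Qed.

Lemma vnorm_ge0 x : 0 <= vnorm x.
Proof. apply: sqrt_pos. Qed.

Lemma vnorm_sq x : vnorm x ^ 2 = dot x x.
Proof. rewrite /vnorm /= Rmult_1_r sqrt_sqrt //; apply: dot_ge0. Qed.

Lemma cauchy_schwarz x y : dot x y <= vnorm x * vnorm y.
Proof.
have Hx := vnorm_sq x; have Hy := vnorm_sq y.
have Nx := vnorm_ge0 x; have Ny := vnorm_ge0 y.
have key : forall a b, 0 <= dot (vsub (vscale a x) (vscale b y)) (vsub (vscale a x) (vscale b y)).
  move=> a b; apply: dot_ge0.
have E : forall a b, dot (vsub (vscale a x) (vscale b y)) (vsub (vscale a x) (vscale b y))
   = a*a*dot x x - 2*a*b*dot x y + b*b*dot y y.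
  move=> a b; rewrite !dot_subl !dot_subr !dot_scalel !dot_scaler (dot_sym y x); ring.
have K := key (vnorm y) (vnorm x); rewrite E -Hx -Hy in K.
case: (Req_dec (vnorm x) 0) => [Z|NZ].
  rewrite Z Rmult_0_l; case: (Rle_dec (dot x y) 0) => D //; apply: Rnot_lt_le => _.
  have K2 := key ((vnorm y ^2 + 1) / dot x y) 1; rewrite E -Hx -Hy Z in K2.
  have: (vnorm y^2+1)/dot x y * dot x y = vnorm y ^2 + 1 by field; lra.
  nra.
case: (Req_dec (vnorm y) 0) => [Z|NZ2].
  rewrite Z Rmult_0_r; case: (Rle_dec (dot x y) 0) => D //; apply: Rnot_lt_le => _.
  have K2 := key 1 ((vnorm x ^2 + 1) / dot x y); rewrite E -Hx -Hy Z in K2.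
  have: (vnorm x^2+1)/dot x y * dot x y = vnorm x ^2 + 1 by field; lra.
  nra.
have Px : 0 < vnorm x by lra.
have Py : 0 < vnorm y by lra.
have: 2 * (vnorm x * vnorm y) * dot x y <= 2 * (vnorm x * vnorm y) * (vnorm x * vnorm y) by nra.
move=> H; apply: (Rmult_le_reg_l (2 * (vnorm x * vnorm y))); nra.
Qed.

Lemma vnorm_add x y : vnorm (vadd x y) <= vnorm x + vnorm y.
Proof.
have Nx := vnorm_ge0 x; have Ny := vnorm_ge0 y; have Na := vnorm_ge0 (vadd x y).
have C := cauchy_schwarz x y.
have E : vnorm (vadd x y) ^ 2 = vnorm x ^ 2 + 2 * dot x y + vnorm y ^ 2.
  rewrite !vnorm_sq dot_addl !dot_addr (dot_sym y x); ring.
nra.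
Qed.

Lemma vnorm_scale a x : vnorm (vscale a x) = Rabs a * vnorm x.
Proof.
rewrite /vnorm dot_scalel dot_scaler -Rmult_assoc sqrt_mult.
- by rewrite -(sqrt_Rsqr_abs a).
- nra.
- apply: dot_ge0.
Qed.

Lemma vsub_add x y : vadd y (vsub x y) = x.
Proof. apply: functional_extensionality => i; rewrite /vsub /vadd; ring. Qed.

Lemma vnorm_sub_le x y : vnorm x <= vnorm y + vnorm (vsub x y).
Proof. rewrite -{1}(vsub_add x y); apply: vnorm_add. Qed.

Lemma vnorm_subC x y : vnorm (vsub x y) = vnorm (vsub y x).
Proof.
have -> : vsub x y = vscale (-1) (vsub y x).
  apply: functional_extensionality => i; rewrite /vsub /vscale; ring.
rewrite vnorm_scale Rabs_Ropp Rabs_R1; ring.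
Qed.

Lemma coord_le x i : Rabs (x i) <= vnorm x.
Proof.
rewrite /vnorm -sqrt_Rsqr_abs; apply: sqrt_le_1_alt.
rewrite /dot (bigD1 i) //= /Rsqr.
match goal with |- _ <= _ + ?S => have: 0 <= S; last lra end.
apply: (big_ind (fun u => 0 <= u)); first lra; first by move=> *; lra.
move=> j _; nra.
Qed.

End V.

Lemma gradA p (h : vec p -> R) g gamma : 0 < gamma -> is_gradient h g ->
  strongly_concave gamma h -> forall x y,
  h x - h y + gamma / 2 * vnorm (vsub x y) ^ 2 <= dot (g y) (vsub x y).
Proof.
move=> Hgam Hgrad Hconc x y.
apply: Rle_plus_epsilon => eta Heta.
set d := vsub x y; set n := vnorm d.
have n0 : 0 <= n by apply: vnorm_ge0.
set e := eta / (2 * (n + 1)).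
have e0 : 0 < e by rewrite /e; apply: Rdiv_lt_0_compat; lra.
have eE : e * (2 * (n + 1)) = eta by rewrite /e; field; lra.
have [delta [Hd Hgd]] := Hgrad y e e0.
set t := Rmin 1 (Rmin (delta / (2 * (n + 1))) (eta / (gamma * n ^ 2 + 1))).
have q0 : 0 <= gamma * n ^ 2 by nra.
have t1 : t <= 1 by apply: Rmin_l.
have t2 : t <= delta / (2 * (n + 1)) by rewrite /t; eapply Rle_trans; [apply: Rmin_r|apply: Rmin_l].
have t3 : t <= eta / (gamma * n ^ 2 + 1) by rewrite /t; eapply Rle_trans; [apply: Rmin_r|apply: Rmin_r].
have t0 : 0 < t.
  rewrite /t; repeat apply: Rmin_glb_lt; try lra; apply: Rdiv_lt_0_compat; lra.
have t2' : t * (2 * (n + 1)) <= delta.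
  have -> : delta = delta / (2 * (n + 1)) * (2 * (n + 1)) by field; lra.
  apply: Rmult_le_compat_r; lra.
have t3' : t * (gamma * n ^ 2 + 1) <= eta.
  have -> : eta = eta / (gamma * n ^ 2 + 1) * (gamma * n ^ 2 + 1) by field; lra.
  apply: Rmult_le_compat_r; lra.
have Hv : vnorm (vscale t d) < delta.
  rewrite vnorm_scale (Rabs_pos_eq t (Rlt_le _ _ t0)).
  have : t * n < t * (2 * (n + 1)) by apply: Rmult_lt_compat_l; lra.
  move=> ?; rewrite -/n; lra.
have G := Hgd (vscale t d) Hv.
rewrite vnorm_scale (Rabs_pos_eq t (Rlt_le _ _ t0)) in G.
rewrite -/n in G.
rewrite dot_scaler in G.
have C := Hconc x y t (conj (Rlt_le _ _ t0) t1).
have EE : vadd (vscale t x) (vscale (1 - t) y) = vadd y (vscale t d).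
  apply: functional_extensionality => i; rewrite /vadd /vscale /d /vsub; ring.
rewrite EE -/d -/n in C.
have G2 := Rle_trans _ _ _ (Rle_abs _) G.
set H := h (vadd y (vscale t d)) in G2 C.
set D := dot (g y) d in G2 *.
have K1 : h x - h y + gamma / 2 * (1 - t) * n ^ 2 <= D + e * n.
  apply: (Rmult_le_reg_l t) => //; nra.
have K2 : e * n <= eta / 2 by nra.
have K3 : gamma / 2 * t * n ^ 2 <= eta / 2 by nra.
nra.
Qed.

Lemma gradmono p (h : vec p -> R) g gamma : 0 < gamma -> is_gradient h g ->
  strongly_concave gamma h -> forall x y,
  dot (vsub (g x) (g y)) (vsub x y) <= - gamma * vnorm (vsub x y) ^ 2.
Proof.
move=> Hg Hgr Hc x y.
have A1 := @gradA p h g gamma Hg Hgr Hc x y.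
have A2 := @gradA p h g gamma Hg Hgr Hc y x.
have E : vsub y x = vscale (-1) (vsub x y).
  apply: functional_extensionality => i; rewrite /vsub /vscale; ring.
rewrite (vnorm_subC y x) E dot_scaler in A2.
rewrite dot_subl; lra.
Qed.

Definition cv (s : nat -> R) l := forall eps, 0 < eps -> exists N : nat, forall n : nat, (N <= n)%nat -> Rabs (s n - l) < eps.

Lemma incr_ge (phi : nat -> nat) : (forall n, (phi n < phi n.+1)%nat) -> forall n, (n <= phi n)%nat.
Proof. move=> H; elim => [|n IH] //; exact: leq_ltn_trans IH (H n). Qed.

Lemma cv_sub s l (phi : nat -> nat) : (forall n, (phi n < phi n.+1)%nat) -> cv s l -> cv (fun n => s (phi n)) l.
Proof.
move=> Hi H eps He; have [N HN] := H eps He; exists N => n Hn; apply: HN.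
have H2 := @incr_ge phi Hi n. exact: (leq_trans Hn H2).
Qed.

Lemma inv_small eps : 0 < eps -> exists N : nat, forall n : nat, (N <= n)%nat -> 1 / (INR n + 1) < eps.
Proof.
move=> He; have [Hk _] := archimed (1 / eps); set k := up (1 / eps) in Hk.
exists (Z.to_nat k) => n Hn.
have Hk' : 1 / eps < INR n + 1.
  have : IZR k <= INR n + 1.
    case: (Z.le_gt_cases 0 k) => Hz.
    + rewrite -(Z2Nat.id k Hz) -INR_IZR_INZ.
      have : (Z.to_nat k <= n)%coq_nat by apply/leP.
      move=> /le_INR; lra.
    + have : IZR k < 0 by apply: IZR_lt; lia.
      have := pos_INR n; lra.
  lra.
have Hn0 := pos_INR n.
apply: (Rmult_lt_reg_r (INR n + 1)); first lra.
have -> : 1 / (INR n + 1) * (INR n + 1) = 1 by field; lra.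
have : 1 / eps * eps = 1 by field; lra.
nra.
Qed.

Lemma bw1 (u : nat -> R) r : (forall n, Rabs (u n) <= r) ->
  exists (phi : nat -> nat) l, (forall n, (phi n < phi n.+1)%nat) /\ cv (fun n => u (phi n)) l.
Proof.
move=> Hu.
have [l Hl] : exists l, ValAdh u l.
  apply: (Bolzano_Weierstrass u (fun x => -r <= x <= r) (compact_P3 (-r) r)).
  move=> n; have := Hu n; split_Rabs; lra.
have Hs : forall k m, exists q, (m <= q)%nat /\ Rabs (u q - l) < 1 / (INR k + 1).
  move=> k m.
  have pos : 0 < 1 / (INR k + 1) by have := pos_INR k; move=> ?; apply: Rdiv_lt_0_compat; lra.
  have NB : neighbourhood (fun z => Rabs (z - l) < 1 / (INR k + 1)) l.
    by exists (mkposreal _ pos) => z Hz.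
  have [q [Hq1 Hq2]] := Hl (fun z => Rabs (z - l) < 1 / (INR k + 1)) m NB.
  by exists q; split; [apply/leP|].
pose sel k m := proj1_sig (constructive_indefinite_description _ (Hs k m)).
have selP : forall k m, (m <= sel k m)%nat /\ Rabs (u (sel k m) - l) < 1 / (INR k + 1).
  move=> k m; exact: (proj2_sig (constructive_indefinite_description _ (Hs k m))).
pose phi := fix f n := if n is n'.+1 then sel n (f n').+1 else sel 0%nat 0%nat.
exists phi, l; split.
- by move=> n /=; have [H1 _] := selP n.+1 (phi n).+1.
- move=> eps He; have [N HN] := inv_small He; exists N => n Hn.
  have : Rabs (u (phi n) - l) < 1 / (INR n + 1) by case: n {Hn} => [|n] /=; apply selP.
  have := HN n Hn; lra.
Qed.

Lemma incr_mono (phi : nat -> nat) : (forall n, (phi n < phi n.+1)%nat) ->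
  forall m n, (m < n)%nat -> (phi m < phi n)%nat.
Proof. move=> H m n; apply: (homo_ltn (r := fun a b => (a < b)%nat)) => //; exact: ltn_trans. Qed.

Lemma multi p (u : nat -> vec p) r : (forall n i, Rabs (u n i) <= r) -> forall k,
  exists phi : nat -> nat, (forall n, (phi n < phi n.+1)%nat) /\
    forall i : 'I_p, (i < k)%nat -> exists li, cv (fun n => u (phi n) i) li.
Proof.
move=> Hu; elim => [|k [phi [Hphi Hc]]].
  by exists id; split.
case: (ltnP k p) => Hk.
- set i0 := Ordinal Hk.
  have [psi [l [Hpsi Hl]]] := @bw1 (fun n => u (phi n) i0) r (fun n => Hu (phi n) i0).
  exists (fun n => phi (psi n)); split.
    by move=> n; apply: incr_mono.
  move=> i Hi; case: (ltnP i k) => Hik.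
    have [li Hli] := Hc i Hik; exists li.
    exact: (@cv_sub (fun n => u (phi n) i) li psi Hpsi Hli).
  have -> : i = i0 by apply: val_inj => /=; apply/eqP; rewrite eqn_leq Hik -ltnS Hi.
  by exists l.
- exists phi; split => // i Hi; apply: Hc; exact: leq_trans (ltn_ord i) Hk.
Qed.

Lemma ball_compact p r : compact_set (fun z : vec p => vnorm z <= r).
Proof.
move=> u Hu.
have Hc : forall n i, Rabs (u n i) <= r by move=> n i; exact: Rle_trans (coord_le _ _) (Hu n).
have [phi [Hphi Hcv]] := @multi p u r Hc p.
have Hl : forall i : 'I_p, exists li, cv (fun n => u (phi n) i) li := fun i => Hcv i (ltn_ord i).
pose l i := proj1_sig (constructive_indefinite_description _ (Hl i)).
have lP : forall i, cv (fun n => u (phi n) i) (l i) :=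
  fun i => proj2_sig (constructive_indefinite_description _ (Hl i)).
have conv : forall eps, 0 < eps -> exists N : nat, forall n : nat, (N <= n)%nat ->
    vnorm (vsub (u (phi n)) l) < eps.
  move=> eps He.
  have p0 := pos_INR p.
  set e' := eps / (INR p + 1).
  have He' : 0 < e' by apply: Rdiv_lt_0_compat; lra.
  have eE : e' * (INR p + 1) = eps by rewrite /e'; field; lra.
  have HN : forall i, exists N : nat, forall n : nat, (N <= n)%nat -> Rabs (u (phi n) i - l i) < e' :=
    fun i => lP i e' He'.
  pose Ni i := proj1_sig (constructive_indefinite_description _ (HN i)).
  have NiP : forall i n, (Ni i <= n)%nat -> Rabs (u (phi n) i - l i) < e' :=
    fun i => proj2_sig (constructive_indefinite_description _ (HN i)).
  exists (\max_(i < p) Ni i)%N => n Hn.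
  have Hi : forall i, Rabs (u (phi n) i - l i) < e'.
    move=> i; apply: NiP; exact: leq_trans (leq_bigmax i) Hn.
  have D : dot (vsub (u (phi n)) l) (vsub (u (phi n)) l) <= INR p * (e' * e').
    rewrite -sum_const; apply: sum_le => i; rewrite /vsub; have := Hi i; split_Rabs; nra.
  rewrite /vnorm -(sqrt_square eps); last lra.
  apply: sqrt_lt_1_alt; split; first exact: dot_ge0.
  nra.
exists phi, l; split => //; split; last exact: conv.
apply: Rle_plus_epsilon => eps He.
have [N HN] := conv eps He.
have := vnorm_sub_le l (u (phi N)); rewrite vnorm_subC.
have := Hu (phi N); have := HN N (leqnn N); lra.
Qed.

Lemma max_exists p (V : vec p -> Prop) (f : vec p -> R) K B v0 :
  compact_set V -> V v0 -> 0 <= K ->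
  (forall a b, f a <= f b + K * vnorm (vsub a b)) ->
  (forall v, V v -> f v <= B) -> exists v, V v /\ forall w, V w -> f w <= f v.
Proof.
move=> Hc V0 HK Hf HB.
pose E := fun y => exists v, V v /\ y = f v.
have [m [Hub Hlub]] : {m | is_lub E m}.
  apply: completeness.
  - by exists B => y [v [Vv ->]]; apply: HB.
  - by exists (f v0), v0.
have Hs : forall n, exists w, V w /\ m - 1 / (INR n + 1) < f w.
  move=> n; apply: NNPP => H.
  have pos : 0 < 1 / (INR n + 1) by have := pos_INR n; move=> ?; apply: Rdiv_lt_0_compat; lra.
  have : is_upper_bound E (m - 1 / (INR n + 1)).
    move=> y [w [Vw ->]]; apply: Rnot_lt_le => Hlt; apply: H; by exists w.
  move/Hlub; lra.
pose v n := proj1_sig (constructive_indefinite_description _ (Hs n)).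
have vP : forall n, V (v n) /\ m - 1 / (INR n + 1) < f (v n) :=
  fun n => proj2_sig (constructive_indefinite_description _ (Hs n)).
have [phi [l [Hphi [Vl Hcv]]]] := Hc v (fun n => proj1 (vP n)).
exists l; split => // w Vw.
have fl : m <= f l.
  apply: Rle_plus_epsilon => eps He.
  have [N1 HN1] := @inv_small (eps / 2) ltac:(lra).
  have He2 : 0 < eps / (2 * (K + 1)) by apply: Rdiv_lt_0_compat; lra.
  have [N2 HN2] := Hcv _ He2.
  set n := maxn N1 N2.
  have h1 := HN1 (phi n) (leq_trans (leq_maxl N1 N2) (@incr_ge phi Hphi n)).
  have h2 := HN2 n (leq_maxr N1 N2).
  have h3 := Hf (v (phi n)) l.
  have h4 := proj2 (vP (phi n)).
  have eE : eps / (2 * (K + 1)) * (2 * (K + 1)) = eps by field; lra.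
  have d0 := vnorm_ge0 (vsub (v (phi n)) l).
  nra.
have := Hub (f w) (ex_intro _ w (conj Vw erefl)); lra.
Qed.
Unset Implicit Arguments.

Lemma divnn x y : 0 <= x -> 0 < y -> 0 <= x / y.
Proof. move=> hx hy; apply: Rmult_le_pos => //; apply/Rlt_le/Rinv_0_lt_compat; lra. Qed.

Lemma alg b M gamma beta r : 0 <= b -> 0 < M -> 0 < gamma ->
  0 < beta <= gamma / (8 * M ^ 2) -> 2 * b / gamma + b / M + 1 <= r ->
  2 * (b * r - gamma * r ^ 2) + beta * (b + M * r) ^ 2 <= 0.
Proof.
move=> b0 M0 g0 [be0 be1] Hr.
set k := gamma / (8 * M ^ 2) in be1.
have kE : k * (8 * M ^ 2) = gamma by rewrite /k; field; lra.
have r1 : 2 * b <= gamma * r.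
  have : 2 * b / gamma * gamma = 2 * b by field; lra.
  have : 0 <= b / M by apply: divnn; lra.
  nra.
have r2 : b <= M * r.
  have : b / M * M = b by field; lra.
  have : 0 <= 2 * b / gamma by apply: divnn; lra.
  nra.
have r0 : 0 <= r by nra.
have s1 : beta * (b + M * r) ^ 2 <= k * (b + M * r) ^ 2 by apply: Rmult_le_compat_r; nra.
have s2 : (b + M * r) ^ 2 <= 4 * (M * r) ^ 2 by nra.
have s3 : k * (4 * (M * r) ^ 2) = gamma * r ^ 2 / 2.
  rewrite -kE; field.
have k0 : 0 < k by rewrite /k; apply: Rdiv_lt_0_compat; nra.
have s4 : k * (b + M * r) ^ 2 <= k * (4 * (M * r) ^ 2) by apply: Rmult_le_compat_l; lra.
nra.
Qed.

Theorem lemma1 (p : nat) (h : vec p -> R) (gradh : vec p -> vec p)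
  (gamma M c : R)
  (Hgamma : 0 < gamma) (HM : 0 < M)
  (Hgrad : is_gradient h gradh)
  (Hconc : strongly_concave gamma h)
  (Hlip : lipschitz M gradh)
  (Hc : 0 <= c) :
  exists V : vec p -> Prop,
    compact_set V /\
    exists Rmax : R,
      (exists v, V v /\ Rmax = vnorm v + gamma / (8 * M ^ 2) * vnorm (gradh v)) /\
      (forall v, V v -> vnorm v + gamma / (8 * M ^ 2) * vnorm (gradh v) <= Rmax) /\
      forall (varphi : vec p -> vec p), (forall z, vnorm (varphi z) <= c) ->
      forall (beta : R), 0 < beta <= gamma / (8 * M ^ 2) ->
      forall z : vec p,
        let y := vadd z (vscale beta (vadd (gradh z) (varphi z))) in
        (~ V z -> vnorm y <= vnorm z) /\
        (V z -> vnorm y <= Rmax + gamma * c / (8 * M ^ 2)).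
Proof.
set k := gamma / (8 * M ^ 2).
have k0 : 0 < k by rewrite /k; apply: Rdiv_lt_0_compat; nra.
pose z0 : vec p := fun _ => 0.
have sz0 : forall v, vsub v z0 = v.
  by move=> v; apply: functional_extensionality => i; rewrite /vsub /z0; ring.
have nz0 : vnorm z0 = 0.
  have -> : z0 = vscale 0 z0 by apply: functional_extensionality => i; rewrite /vscale /z0; ring.
  by rewrite vnorm_scale Rabs_R0 Rmult_0_l.
set a := vnorm (gradh z0).
have a0 : 0 <= a by apply: vnorm_ge0.
set b := a + c.
have bb0 : 0 <= b by rewrite /b; lra.
set r0 := 2 * b / gamma + b / M + 1.
have r00 : 0 <= r0.
  have : 0 <= 2 * b / gamma by apply: divnn; lra.
  have : 0 <= b / M by apply: divnn; lra.
  rewrite /r0; lra.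
have Hg : forall v, vnorm (gradh v) <= a + M * vnorm v.
  move=> v; have := vnorm_sub_le (gradh v) (gradh z0); have := Hlip v z0.
  rewrite sz0; rewrite -/a; lra.
pose f v := vnorm v + k * vnorm (gradh v).
have Hf : forall x y, f x <= f y + (1 + k * M) * vnorm (vsub x y).
  move=> x y; rewrite /f.
  have := vnorm_sub_le x y; have := vnorm_sub_le (gradh x) (gradh y); have := Hlip x y.
  move=> h1 h2 h3.
  have : k * vnorm (gradh x) <= k * (vnorm (gradh y) + M * vnorm (vsub x y)).
    apply: Rmult_le_compat_l; lra.
  lra.
have [vm [Vvm Hmax]] : exists v, vnorm v <= r0 /\ forall w, vnorm w <= r0 -> f w <= f v.
  apply: (@max_exists p (fun z => vnorm z <= r0) f (1 + k * M) (r0 + k * (a + M * r0)) z0).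
  - exact: ball_compact.
  - lra.
  - nra.
  - exact: Hf.
  - move=> v Hv; rewrite /f.
    have h1 := Hg v.
    have h2 : k * vnorm (gradh v) <= k * (a + M * vnorm v) by apply: Rmult_le_compat_l; lra.
    have h3 : k * M * vnorm v <= k * M * r0 by apply: Rmult_le_compat_l; nra.
    nra.
exists (fun z => vnorm z <= r0); split; first exact: ball_compact.
exists (f vm); split; first by exists vm.
split; first exact: Hmax.
move=> varphi Hphi beta Hbeta z y.
set w := vadd (gradh z) (varphi z).
set r := vnorm z.
have r0' : 0 <= r by apply: vnorm_ge0.
have Hw : vnorm w <= b + M * r.
  have := vnorm_add (gradh z) (varphi z); have := Hg z; have := Hphi z; rewrite -/w -/r /b; lra.
split.
- move=> /Rnot_le_lt Hr.
  rewrite /y /vnorm; apply: sqrt_le_1_alt.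
  have E : forall u v : vec p, dot (vadd u (vscale beta v)) (vadd u (vscale beta v)) =
      dot u u + 2 * beta * dot v u + beta ^ 2 * dot v v.
    move=> u v; rewrite !dot_addl !dot_addr !dot_scalel !dot_scaler (dot_sym u v); ring.
  rewrite E.
  have Dwz : dot w z <= b * r - gamma * r ^ 2.
    rewrite /w dot_addl.
    have c1 : dot (varphi z) z <= c * r.
      have := cauchy_schwarz (varphi z) z; have := Hphi z; rewrite -/r.
      have := vnorm_ge0 (varphi z); nra.
    have c2 : dot (gradh z) z = dot (vsub (gradh z) (gradh z0)) z + dot (gradh z0) z.
      rewrite dot_subl; ring.
    have c3 := gradmono Hgamma Hgrad Hconc z z0.
    rewrite sz0 -/r in c3.
    have c4 := cauchy_schwarz (gradh z0) z; rewrite -/a -/r in c4.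
    rewrite c2 /b; lra.
  have Dww : dot w w <= (b + M * r) ^ 2.
    rewrite -vnorm_sq; have := vnorm_ge0 w; nra.
  have := @alg b M gamma beta r bb0 HM Hgamma Hbeta (Rlt_le _ _ Hr).
  case: Hbeta => be0 _ => H.
  have H2 : 2 * dot w z + beta * dot w w <= 2 * (b * r - gamma * r ^ 2) + beta * (b + M * r) ^ 2.
    have : beta * dot w w <= beta * (b + M * r) ^ 2 by apply: Rmult_le_compat_l; lra.
    lra.
  have : beta * (2 * dot w z + beta * dot w w) <= 0.
    have : beta * (2 * dot w z + beta * dot w w) <= beta * 0 by apply: Rmult_le_compat_l; lra.
    lra.
  move=> H3; rewrite -/w; lra.
- move=> Vz.
  rewrite /y.
  have := vnorm_add z (vscale beta w); rewrite vnorm_scale Rabs_pos_eq; last lra.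
  have := vnorm_add (gradh z) (varphi z); rewrite -/w.
  have := Hmax z Vz; rewrite /f -/r.
  have := Hphi z.
  have := vnorm_ge0 (gradh z).
  have : gamma * c / (8 * M ^ 2) = k * c by rewrite /k; field; lra.
  case: Hbeta => be0 be1.
  nra.
Qed.
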